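(* Let $R$ be a commutative ring with identity. Then $R$ is almost complemented if and only if its classical ring of quotients $q(R)$ is almost complemented.
   Context: $\mathfrak{N}(R)$ is the nilradical, $\mathrm{reg}(R)$ the set of regular elements (non-zero-divisors), and $q(R)$ the localization of $R$ at $\mathrm{reg}(R)$. A ring $A$ is complemented if for every $a\in A$ there is $b\in A$ with $ab=0$ and $a+b\in\mathrm{reg}(A)$. $R$ is almost complemented if $R/\mathfrak{N}(R)$ is complemented. *)

(* Defs.v *)
From HB Require Import structures.
From mathcomp Require Import all_boot all_algebra.
Set Implicit Arguments. Unset Strict Implicit. Unset Printing Implicit Defensive.
Import GRing.Theory.
Local Open Scope ring_scope.

Definition regular (R : comPzRingType) (x : R) : Prop :=
  forall y : R, x * y = 0 -> y = 0.

Definition in_nilradical (R : comPzRingType) (x : R) : Prop :=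
  exists n : nat, x ^+ n = 0.

Definition complemented (A : comPzRingType) : Prop :=
  forall a : A, exists b : A, a * b = 0 /\ regular (a + b).

(* R is almost complemented: R/N(R) is complemented.  Written out on
   representatives: the class of x in R/N(R) is zero iff x \in N(R), so
   "(a+N)(b+N) = 0" is "a*b \in N(R)" and "a+b+N regular in R/N(R)" is
   "forall y, (a+b)*y \in N(R) -> y \in N(R)". *)
Definition almost_complemented (R : comPzRingType) : Prop :=
  forall a : R, exists b : R,
    in_nilradical (a * b) /\
    (forall y : R, in_nilradical ((a + b) * y) -> in_nilradical y).

(* f : R -> Q exhibits Q as the classical ring of quotients q(R) = reg(R)^{-1} R,
   via the standard universal characterization of the localization at
   S = reg(R):  f(s) is a unit for s in S; every element is f(a)/f(s);
   ker f = {a | s a = 0 for some s in S}. *)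
Definition classical_quotient_ring (R Q : comPzRingType) (f : {rmorphism R -> Q}) : Prop :=
  [/\ forall s : R, regular s -> exists t : Q, f s * t = 1,
      forall q : Q, exists a s : R, regular s /\ q * f s = f a
    & forall a : R, f a = 0 -> exists s : R, regular s /\ s * a = 0].

(* Main.v *)
Require Import Defs.
From HB Require Import structures.
From mathcomp Require Import all_boot all_algebra.
From mathcomp Require Import zify ring.
Set Implicit Arguments. Unset Strict Implicit.
Import GRing.Theory.
Local Open Scope ring_scope.

Section Nil.
Variable R : comPzRingType.

Lemma expr_ge0 (x : R) m n : x ^+ m = 0 -> (m <= n)%N -> x ^+ n = 0.
Proof. by move=> h le; rewrite -(subnK le) exprD h mulr0. Qed.

Lemma nilM (x y : R) : in_nilradical x -> in_nilradical (x * y).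
Proof. by case=> n h; exists n; rewrite exprMn h mul0r. Qed.

Lemma nilMl (x y : R) : in_nilradical y -> in_nilradical (x * y).
Proof. by rewrite mulrC; apply: nilM. Qed.

Lemma nilD (x y : R) : in_nilradical x -> in_nilradical y -> in_nilradical (x + y).
Proof.
case=> m hm [k hk]; exists (m + k)%N; rewrite exprDn big1 // => i _.
case: (leqP m (m + k - i)) => h.
  by rewrite (expr_ge0 hm h) mul0r mul0rn.
have hi : (k <= i)%N.
  have := ltn_ord i; move: h; clear; lia.
by rewrite (expr_ge0 hk hi) mulr0 mul0rn.
Qed.

Lemma nilN (x : R) : in_nilradical x -> in_nilradical (- x).
Proof. by move=> h; rewrite -mulN1r; apply: nilMl. Qed.

Lemma nilB (x y : R) : in_nilradical x -> in_nilradical y -> in_nilradical (x - y).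
Proof. by move=> hx hy; apply: nilD => //; apply: nilN. Qed.

Lemma nilSq (x : R) : in_nilradical (x * x) -> in_nilradical x.
Proof. by case=> n h; exists (2 * n)%N; rewrite exprM expr2. Qed.

Lemma nilU (u t z : R) : t * u = 1 -> in_nilradical (u * z) -> in_nilradical z.
Proof. by move=> h hz; rewrite -[z]mul1r -h -mulrA; apply: nilMl. Qed.
End Nil.

Theorem mainTheorem6 (R Q : comPzRingType) (f : {rmorphism R -> Q}) :
  classical_quotient_ring f ->
  (almost_complemented R <-> almost_complemented Q).
Proof.
case=> Hu Hq Hk.
have fnil x : in_nilradical x -> in_nilradical (f x).
  by case=> n h; exists n; rewrite -rmorphXn h rmorph0.
have fnilR x : in_nilradical (f x) -> in_nilradical x.
  case=> n h; exists n; move: h; rewrite -rmorphXn => /Hk [s [rs hs]].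
  exact: rs.
split=> H.
- move=> q; have [a [s [rs hq]]] := Hq q.
  have [t ht] := Hu s rs.
  have [b [hab hreg]] := H a.
  exists (f b * t); split.
    apply: (@nilU _ (f s * f s) (t * t)).
      by rewrite mulrACA [t * _]mulrC ht mulr1.
    have -> : f s * f s * (q * (f b * t)) = f (a * b) * (f s * t).
      by rewrite rmorphM -hq; ring.
    by apply: nilM; apply: fnil.
  move=> y hy; have [c [r [rr hy']]] := Hq y.
  have [w hw] := Hu r rr.
  apply: (@nilU _ (f r) w); first by rewrite mulrC.
  rewrite mulrC hy'; apply: fnil; apply: hreg; apply: fnilR.
  have -> : f ((a + b) * c) = (q + f b * t) * y * (f s * f r).
    have -> : (q + f b * t) * y * (f s * f r) = (q * f s + f b * (f s * t)) * (y * f r) by ring.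
    by rewrite ht mulr1 rmorphM rmorphD -hq -hy'.
  exact: nilM.
- move=> a; have [p [hap hreg]] := H (f a).
  have [c [s [rs hc]]] := Hq p.
  have [t ht] := Hu s rs.
  exists c; split.
    apply: fnilR; rewrite rmorphM -hc mulrA; exact: nilM.
  move=> y hy; apply: fnilR.
  have hY := fnil _ hy; rewrite rmorphM rmorphD -hc in hY.
  set A := f a in hap hY *; set U := f s in hY ht; set Y := f y in hY *.
  have h1 : in_nilradical (A * A * Y).
    have -> : A * A * Y = A * ((A + p * U) * Y) - U * (A * p) * Y by ring.
    apply: nilB; first exact: nilMl.
    by apply: nilM; apply: nilMl.
  have h2 : in_nilradical (A * Y).
    apply: nilSq; have -> : A * Y * (A * Y) = A * A * Y * Y by ring.
    exact: nilM.
  have h3 : in_nilradical (p * Y).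
    apply: (@nilU _ U t); first by rewrite mulrC.
    have -> : U * (p * Y) = (A + p * U) * Y - A * Y by ring.
    exact: nilB.
  apply: hreg; rewrite mulrDl; exact: nilD.
Qed.
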